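(* Let $A$ be $K\{X\}_\infty$ or $K\{X\}$ and let $f\in A^{(n)}$ be homogeneous of degree $n\ge1$. (i) If $f$ is primitive, then $\langle f,g_1\sqcup\!\sqcup g_2\rangle=0$ for all homogeneous $g_1,g_2\in A$ of degree $\ge1$. (ii) If $S$ is a monomial of degree $k$ with $1\le k\le n-1$, then $\partial_S(f)=0$ if and only if $\langle f,S\sqcup\!\sqcup g\rangle=0$ for all $g\in A^{(n-k)}$. (iii) If $f$ is orthogonal to all shuffle products $S\sqcup\!\sqcup T$ with $S,T$ monomials of degrees $k$ and $n-k$, $1\le k<\frac{n+1}{2}$, then $f$ is primitive.
   Context: $K$ is a field of characteristic $0$, $X=\{x_1,x_2,\dots\}$ a finite or countable set of variables. A planar rooted tree is reduced if no vertex has exactly one incoming edge. $K\{X\}_\infty$ has basis the monomials: the empty tree $1$ and all planar reduced rooted trees with leaves labelled by elements of $X$, graded by number of leaves ($A^{(n)}$); for $k\ge2$, $\vee^k$ grafts $k$ nonempty trees (in order) onto a new root, extended multilinearly, with unit conventions (arguments $1$ omitted, $\vee^1=\mathrm{id}$, $\vee^k(1,\dots,1)=1$). $K\{X\}$ is the span of $1$ and the binary monomials. $A\otimes A$ carries the operations componentwise, the co-addition $\Delta_a$ is the unique unital homomorphism with $\Delta_a(x_i)=x_i\otimes1+1\otimes x_i$, and $f$ is primitive if $\Delta_a(f)=f\otimes1+1\otimes f$. $\langle\,,\rangle$ is the bilinear form on $A$ making monomials orthonormal, extended factorwise to $A\otimes A$; $\sqcup\!\sqcup$ is defined by $\langle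 g_1\sqcup\!\sqcup g_2,h\rangle=\langle g_1\otimes g_2,\Delta_a(h)\rangle$ for all $h\in A$. For a monomial $T$ of $A$, $\partial_T:A\to A$ is defined by $\Delta_a(f)=\sum_T T\otimes\partial_T(f)$ (sum over monomials of $A$). *)

(* Defs.v *)
From HB Require Import structures.
From mathcomp Require Import all_boot all_order all_algebra.
Set Implicit Arguments. Unset Strict Implicit. Unset Printing Implicit Defensive.
Import Order.TTheory GRing.Theory Num.Theory.
Local Open Scope ring_scope.

(* Planar rooted trees with leaves labelled by X (not yet required reduced). *)
Inductive tree (X : Type) : Type :=
| Leaf of X
| Node of seq (tree X).
Arguments Leaf {X}.
Arguments Node {X}.

Section TreeCount.
Variable X : countType.

Fixpoint tree_enc (t : tree X) : GenTree.tree X :=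
  match t with
  | Leaf x => GenTree.Leaf x
  | Node ts => GenTree.Node 0 (map tree_enc ts)
  end.

Fixpoint tree_dec (g : GenTree.tree X) : option (tree X) :=
  match g with
  | GenTree.Leaf x => Some (Leaf x)
  | GenTree.Node _ gs => Some (Node (pmap tree_dec gs))
  end.

Lemma tree_encK : pcancel tree_enc tree_dec.
Proof.
rewrite /pcancel; fix IH 1; case=> [x|ts] //=; congr (Some (Node _)).
elim: ts => [|t ts IHts] //=; by rewrite IH /= IHts.
Qed.

HB.instance Definition _ := Countable.copy (tree X) (pcan_type tree_encK).
End TreeCount.

(* Monomials: None is the empty tree 1, Some t a nonempty tree. *)
Definition mon (X : countType) := option (tree X).

Fixpoint nleaves (X : Type) (t : tree X) : nat :=
  match t with Leaf _ => 1%N | Node ts => sumn (map (@nleaves X) ts) end.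

Definition deg (X : countType) (m : mon X) : nat :=
  if m is Some t then nleaves t else 0%N.

Fixpoint reduced (X : Type) (t : tree X) : bool :=
  match t with
  | Leaf _ => true
  | Node ts => (2 <= size ts)%N && all (@reduced X) ts
  end.

Fixpoint binary (X : Type) (t : tree X) : bool :=
  match t with
  | Leaf _ => true
  | Node ts => (size ts == 2)%N && all (@binary X) ts
  end.

(* Which algebra: K{X}_oo (all reduced monomials) or K{X} (binary ones). *)
Inductive algkind := Kinf | Kbin.

Definition admissible (A : algkind) (X : countType) (m : mon X) : bool :=
  match m with
  | None => true
  | Some t => reduced t && (if A is Kbin then binary t else true)
  end.

(* vee^k with unit conventions: arguments 1 omitted, vee^1 = id,
   vee^k(1,...,1) = 1. *)
Definition vee (X : countType) (ms : seq (mon X)) : mon X :=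
  match pmap id ms with
  | [::] => None
  | [:: t] => Some t
  | ts => Some (Node ts)
  end.

Definition choices (T : Type) (ls : seq (seq T)) : seq (seq T) :=
  foldr (fun l acc => [seq x :: r | x <- l, r <- acc]) [:: [::]] ls.

(* Co-addition on a nonempty tree, as a list of tensors T1 (x) T2 (each
   with coefficient 1): Delta(x) = x(x)1 + 1(x)x, and Delta is a
   homomorphism for the componentwise vee^k on A (x) A. *)
Fixpoint delta_tree (X : countType) (t : tree X) : seq (mon X * mon X) :=
  match t with
  | Leaf x => [:: (Some (Leaf x), None); (None, Some (Leaf x))]
  | Node ts =>
      [seq (vee (map fst ps), vee (map snd ps))
      | ps <- choices (map (@delta_tree X) ts)]
  end.

Definition delta_mon (X : countType) (m : mon X) : seq (mon X * mon X) :=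
  if m is Some t then delta_tree t else [:: (None, None)].

Section Lin.
Variables (X : countType) (K : fieldType).

(* Elements of A (resp. A (x) A) are finite formal linear combinations;
   they are compared through their coefficient functions. *)
Definition coef (M : eqType) (f : seq (K * M)) (m : M) : K :=
  \sum_(p <- f) p.1 * (p.2 == m)%:R.

Definition inA (A : algkind) (f : seq (K * mon X)) : Prop :=
  all (fun p => admissible A p.2) f.

Definition homog (n : nat) (f : seq (K * mon X)) : Prop :=
  forall m, coef f m != 0 -> deg m = n.

Definition monom (m : mon X) : seq (K * mon X) := [:: (1, m)].

Definition deltaA (f : seq (K * mon X)) : seq (K * (mon X * mon X)) :=
  flatten [seq [seq (p.1, q) | q <- delta_mon p.2] | p <- f].

Definition primitive (f : seq (K * mon X)) : Prop :=
  forall P : mon X * mon X,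
    coef (deltaA f) P =
    coef ([seq (p.1, (p.2, None)) | p <- f] ++ [seq (p.1, (None, p.2)) | p <- f]) P.

(* <f, h> for f in A and h given by its coefficient function *)
Definition pairing (f : seq (K * mon X)) (h : mon X -> K) : K :=
  \sum_(p <- f) p.1 * h p.2.

(* coefficient function of g1 ⊔⊔ g2 in A: its coefficient at a monomial T
   of A is <g1 (x) g2, Delta_a(T)>, and 0 outside A. *)
Definition shuffle (A : algkind) (g1 g2 : seq (K * mon X)) : mon X -> K :=
  fun T => if admissible A T then
             \sum_(q <- delta_mon T) coef g1 q.1 * coef g2 q.2
           else 0.

Definition dpart (S : mon X) (f : seq (K * mon X)) : mon X -> K :=
  fun U => coef (deltaA f) (S, U).

End Lin.

(* Main.v *)
Require Import Defs.
From HB Require Import structures.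
From mathcomp Require Import all_boot all_order all_algebra.
From mathcomp Require Import zify.
Set Implicit Arguments. Unset Strict Implicit. Unset Printing Implicit Defensive.
Import Order.TTheory GRing.Theory Num.Theory.
Local Open Scope ring_scope.

Section LinLemmas.
Variables (K : fieldType) (M : eqType).

Lemma sum_pick (s : seq M) (x : M) (h : M -> K) : uniq s -> x \in s ->
  \sum_(m <- s) (x == m)%:R * h m = h x.
Proof.
move=> us xs.
rewrite (eq_bigr (fun m => if pred1 x m then h m else 0)); last first.
  by move=> m _; rewrite /= eq_sym; case: eqP; rewrite ?mul1r ?mul0r.
by rewrite -big_mkcond -big_filter filter_pred1_uniq // big_seq1.
Qed.

Lemma Lsum (L : seq (K * M)) (s : seq M) (h : M -> K) : uniq s ->
  {subset map snd L <= s} ->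
  \sum_(p <- L) p.1 * h p.2 = \sum_(m <- s) coef L m * h m.
Proof.
move=> us; elim: L => [|a L IH] sub.
  by rewrite big_nil big1 // => m _; rewrite /coef big_nil mul0r.
rewrite big_cons IH; last by move=> x xL; apply: sub; rewrite inE xL orbT.
rewrite /coef.
under [RHS]eq_bigr do rewrite big_cons mulrDl.
rewrite big_split /=; congr (_ + _).
under eq_bigr do rewrite -mulrA.
rewrite -mulr_sumr sum_pick //; apply: sub; by rewrite inE eqxx.
Qed.

Lemma Lsum_undup (L : seq (K * M)) (h : M -> K) :
  \sum_(p <- L) p.1 * h p.2 = \sum_(m <- undup (map snd L)) coef L m * h m.
Proof. by apply: Lsum; rewrite ?undup_uniq // => x; rewrite mem_undup. Qed.

Lemma lin_ext (L : seq (K * M)) (h1 h2 : M -> K) :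
  (forall m, coef L m != 0 -> h1 m = h2 m) ->
  \sum_(p <- L) p.1 * h1 p.2 = \sum_(p <- L) p.1 * h2 p.2.
Proof.
move=> H; rewrite !Lsum_undup; apply: eq_bigr => m _.
by case: (eqVneq (coef L m) 0) => [->|/H ->]; rewrite ?mul0r.
Qed.

Lemma lin_coef (L1 L2 : seq (K * M)) (h : M -> K) :
  coef L1 =1 coef L2 ->
  \sum_(p <- L1) p.1 * h p.2 = \sum_(p <- L2) p.1 * h p.2.
Proof.
move=> E; set s := undup (map snd (L1 ++ L2)).
have us : uniq s by rewrite undup_uniq.
rewrite (@Lsum L1 s) // ?(@Lsum L2 s) //.
- by apply: eq_bigr => m _; rewrite E.
- by move=> x xL; rewrite mem_undup map_cat mem_cat xL orbT.
- by move=> x xL; rewrite mem_undup map_cat mem_cat xL.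
Qed.

Lemma sum_nz (I : eqType) (s : seq I) (F : I -> K) :
  \sum_(i <- s) F i != 0 -> exists2 i, i \in s & F i != 0.
Proof.
elim: s => [|a s IH]; first by rewrite big_nil eqxx.
rewrite big_cons; case: (eqVneq (F a) 0) => [->|Fa _]; last by exists a => //; rewrite inE eqxx.
by rewrite add0r => /IH [i ? ?]; exists i => //; rewrite inE; apply/orP; right.
Qed.

End LinLemmas.
Section Trees.
Variable X : countType.
Implicit Types (t : tree X) (ts : seq (tree X)) (m : mon X).

Fixpoint Pall (P : tree X -> Prop) ts : Prop :=
  if ts is t :: ts' then P t /\ Pall P ts' else True.

Lemma PallP P ts : Pall P ts -> forall t, t \in ts -> P t.
Proof.
elim: ts => [|a ts IH] //= [Pa H] t; rewrite inE => /orP [/eqP ->|] //.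
exact: IH.
Qed.

Definition tree_ind2 (P : tree X -> Prop) (HL : forall x, P (Leaf x))
  (HN : forall ts, Pall P ts -> P (Node ts)) : forall t, P t :=
  fix F t := match t with
  | Leaf x => HL x
  | Node ts => HN ts ((fix G ts : Pall P ts :=
       match ts return Pall P ts with
       | [::] => I
       | t0 :: ts' => conj (F t0) (G ts')
       end) ts)
  end.

Lemma deg_pmap (ms : seq (mon X)) :
  sumn (map (@deg X) ms) = sumn (map (@nleaves X) (pmap id ms)).
Proof. by elim: ms => [|[a|] ms IH] //=; rewrite IH. Qed.

Lemma vee_deg (ms : seq (mon X)) : deg (vee ms) = sumn (map (@deg X) ms).
Proof.
rewrite deg_pmap /vee; case: (pmap id ms) => [|a [|b r]] //=.
by rewrite addn0.
Qed.

Lemma vee_None (ms : seq (mon X)) : (vee ms == None) = all (fun m => m == None) ms.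
Proof.
have -> : all (fun m => m == None) ms = (pmap id ms == [::]).
  by elim: ms => [|[a|] ms IH] //=.
by rewrite /vee; case: (pmap id ms) => [|a [|b r]].
Qed.

Lemma vee_adm A (ms : seq (mon X)) : all (@admissible A X) ms ->
  (A = Kbin -> size ms <= 2)%N -> admissible A (vee ms).
Proof.
move=> H Hs.
have Hp : all (fun t => admissible A (Some t)) (pmap id ms).
  by elim: ms H {Hs} => [|[a|] ms IH] //= /andP [] // -> /IH.
have Hsz : (size (pmap id ms) <= size ms)%N.
  by elim: ms {H Hs Hp} => [|[a|] ms IH] //=; apply: leqW.
rewrite /vee; move: Hp Hsz; case E: (pmap id ms) => [|a [|b r]] //=.
  by rewrite andbT.
move=> /and3P [Ha Hb Hr] Hsz /=.
clear H; case: A Ha Hb Hr Hs => /= Ha Hb Hr Hs.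
  rewrite (andP Ha).1 (andP Hb).1 /=.
  by elim: r Hr {E Hsz} => [|c r IH] //= /andP [/andP [-> _] /IH].
rewrite (andP Ha).1 (andP Hb).1 (andP Ha).2 (andP Hb).2 /=.
have := Hs erefl => Hs2.
have : (size r == 0)%N by move: (leq_trans Hsz Hs2); rewrite ltnS ltnS leqn0.
by case: r {Hr E Hsz} .
Qed.

Lemma choices_mem (T : eqType) (ls : seq (seq T)) ps :
  ps \in choices ls -> all2 (fun p l => p \in l) ps ls.
Proof.
elim: ls ps => [|l ls IH] ps /=; first by rewrite inE => /eqP ->.
case/allpairsP => [[x r] [/= xl rc ->]] /=; by rewrite xl IH.
Qed.

Lemma all2_delta (Q : tree X -> mon X * mon X -> bool) ps ts :
  all2 (fun p l => p \in l) ps (map (@delta_tree X) ts) ->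
  (forall t, t \in ts -> forall q, q \in delta_tree t -> Q t q) ->
  all2 (fun p t => Q t p) ps ts.
Proof.
elim: ts ps => [|t ts IH] [|p ps] //= /andP [pt H] HQ.
rewrite HQ ?inE ?eqxx //= IH // => t' t'in; apply: HQ; by rewrite inE t'in orbT.
Qed.

Lemma all2_sum A ps ts :
  all2 (fun p t => [&& admissible A p.1, admissible A p.2 & deg p.1 + deg p.2 == nleaves t]) ps ts ->
  [&& all (@admissible A X) (map fst ps), all (@admissible A X) (map snd ps),
      sumn (map (@deg X) (map fst ps)) + sumn (map (@deg X) (map snd ps)) == sumn (map (@nleaves X) ts)
    & size ps == size ts].
Proof.
elim: ts ps => [|t ts IH] [|p ps] //= /andP [/and3P [h1 h2 /eqP h3] /IH /and4P [a1 a2 /eqP a3 a4]].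
rewrite h1 h2 a1 a2 /=; rewrite eqSS a4 andbT -h3 -a3; apply/eqP; lia.
Qed.

Lemma nleaves_pos t : reduced t -> (0 < nleaves t)%N.
Proof.
elim/tree_ind2: t => [x|ts IH] //= /andP [s2 ar].
case: ts IH s2 ar => [|a ts] //= [IHa _] _ /andP [ra _].
by rewrite addn_gt0 IHa.
Qed.

Definition admP A t := admissible A (Some t).

Lemma adm_node A ts : admP A (Node ts) ->
  [/\ (2 <= size ts)%N, (A = Kbin -> size ts = 2) & forall t, t \in ts -> admP A t].
Proof.
rewrite /admP /=; case: A => /= /andP [/andP [s2 ar]] => [_|/andP [/eqP s ab]].
  by split => // t tin; rewrite (allP ar).
by split => // t tin; rewrite (allP ar) // (allP ab).
Qed.

Lemma delta_struct A t : admP A t -> forall q, q \in delta_tree t ->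
  [&& admissible A q.1, admissible A q.2 & deg q.1 + deg q.2 == nleaves t].
Proof.
elim/tree_ind2: t => [x|ts IH] Ht q.
  by rewrite !inE => /orP [] /eqP -> /=; case: A {Ht}.
case/adm_node: Ht => s2 sb Hc /=.
case/mapP => ps /choices_mem H ->.
have := all2_delta (Q := fun t q => [&& admissible A q.1, admissible A q.2 & deg q.1 + deg q.2 == nleaves t]) H.
move/(_ (fun t tin => PallP IH tin (Hc t tin))) => {}H.
have {H} := all2_sum H => /and4P [a1 a2 /eqP sd /eqP sz].
rewrite /= !vee_deg sd eqxx andbT; apply/andP; split; apply: vee_adm => //;
  by rewrite size_map sz => /sb ->.
Qed.
End Trees.
Section Trees2.
Variable X : countType.
Implicit Types (t : tree X) (ts : seq (tree X)) (m : mon X).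

Lemma filter_choices (T : Type) (P : pred T) (ls : seq (seq T)) :
  filter (all P) (choices ls) = choices (map (filter P) ls).
Proof.
elim: ls => [|l ls IH] //=.
rewrite -IH; elim: l => [|x l IHl] //=.
rewrite filter_cat IHl filter_map.
case Px: (P x) => /=.
  by congr (_ ++ _); congr map; apply: eq_filter => r /=; rewrite Px.
by rewrite (@eq_filter _ _ pred0) ?filter_pred0 // => r /=; rewrite Px.
Qed.

Lemma choices_single (T U : Type) (g : U -> T) (us : seq U) :
  choices (map (fun u => [:: g u]) us) = [:: map g us].
Proof. by elim: us => [|u us IH] //=; rewrite IH. Qed.

Lemma pmap_some (ts : seq (tree X)) : pmap id (map Some ts) = ts.
Proof. by elim: ts => [|t ts IH] //=; rewrite IH. Qed.

Lemma delta_filter A t : admP A t ->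
  filter (fun q => q.2 == None) (delta_tree t) = [:: (Some t, None)].
Proof.
elim/tree_ind2: t => [x|ts IH] Ht //=.
case/adm_node: Ht => s2 _ Hc.
rewrite filter_map.
rewrite (@eq_filter _ _ (all (fun p : mon X * mon X => p.2 == None))); last first.
  by move=> ps /=; rewrite vee_None all_map.
rewrite filter_choices -map_comp.
rewrite (_ : map _ ts = map (fun t => [:: (Some t, @None (tree X))]) ts); last first.
  by apply/eq_in_map => t tin /=; apply: (PallP IH tin); apply: Hc.
rewrite choices_single /= -!map_comp /=.
have -> : vee [seq None | _ <- ts] = @None (tree X).
  by apply/eqP; rewrite vee_None; apply/allP => ? /mapP [? _ ->].
rewrite /vee pmap_some.
by case: ts s2 {IH Hc} => [|a [|b r]].
Qed.

Lemma map_choices (T U : Type) (g : T -> U) (ls : seq (seq T)) :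
  map (map g) (choices ls) = choices (map (map g) ls).
Proof.
elim: ls => [|l ls IH] //=.
by rewrite map_allpairs allpairs_mapl -IH allpairs_mapr.
Qed.

Lemma perm_choices (T : eqType) (ls1 ls2 : seq (seq T)) :
  all2 (fun l1 l2 => perm_eq l1 l2) ls1 ls2 -> perm_eq (choices ls1) (choices ls2).
Proof.
elim: ls1 ls2 => [|l1 ls1 IH] [|l2 ls2] //= /andP [p12 /IH H].
exact: perm_allpairs.
Qed.

Definition swp (q : mon X * mon X) := (q.2, q.1).

Lemma delta_swap t : perm_eq (map swp (delta_tree t)) (delta_tree t).
Proof.
elim/tree_ind2: t => [x|ts IH] /=.
  by rewrite (perm_catC [:: _] [:: _]).
rewrite -map_comp.
rewrite (@eq_map _ _ _ ((fun ps => (vee (map fst ps), vee (map snd ps))) \o map swp)); last first.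
  by move=> ps /=; rewrite /swp -!map_comp.
rewrite map_comp map_choices; apply: perm_map; apply: perm_choices.
elim: ts IH => [|t ts IHts] //= [H1 H2].
by rewrite H1 IHts.
Qed.
End Trees2.
Section Main.
Variables (X : countType) (K : fieldType) (A : algkind).
Implicit Types (f : seq (K * mon X)) (m : mon X).

Definition cnt m (P : mon X * mon X) : K := \sum_(q <- delta_mon m) (q == P)%:R.

Lemma coef_deltaA f P : coef (deltaA f) P = \sum_(p <- f) p.1 * cnt p.2 P.
Proof.
rewrite /coef /deltaA big_flatten /= big_map; apply: eq_bigr => p _.
by rewrite big_map mulr_sumr.
Qed.

Lemma pair_shuffle f g1 g2 : inA A f ->
  pairing f (shuffle A g1 g2) =
  \sum_(P <- deltaA f) P.1 * (coef g1 P.2.1 * coef g2 P.2.2).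
Proof.
move=> fA; rewrite /pairing /deltaA big_flatten big_map big_seq_cond [RHS]big_seq_cond.
apply: eq_bigr => p /andP [pin _]; rewrite /shuffle (allP fA p pin) big_map mulr_sumr.
by rewrite big_seq_cond.
Qed.

Lemma coef_monom (S x : mon X) : coef (monom K S) x = (S == x)%:R.
Proof. by rewrite /coef /monom big_seq1 mul1r. Qed.

Lemma pair_mon f (S T : mon X) : inA A f ->
  pairing f (shuffle A (monom K S) (monom K T)) = coef (deltaA f) (S, T).
Proof.
move=> fA; rewrite pair_shuffle //; apply: eq_bigr => P _.
rewrite !coef_monom -natrM mulnb; congr (_ * _%:R).
by case: P => [a [b c]] /=; rewrite xpair_eqE ![S == _]eq_sym ![T == _]eq_sym.
Qed.

Lemma coef_mem (M : eqType) (L : seq (K * M)) x : coef L x != 0 -> x \in map snd L.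
Proof.
case/sum_nz => p pin; case: (eqVneq p.2 x) => [<- _|_]; last by rewrite mulr0 eqxx.
by apply/mapP; exists p.
Qed.

Lemma cnt_struct m P : admissible A m -> cnt m P != 0 ->
  [&& admissible A P.1, admissible A P.2 & deg P.1 + deg P.2 == deg m].
Proof.
move=> Hm /sum_nz [q qin]; case: (eqVneq q P) => [<- _|_]; last by rewrite eqxx.
case: m Hm qin => [t|] Ht /=; first exact: delta_struct.
by rewrite inE => /eqP ->.
Qed.

Lemma coefdelta_struct f n P : inA A f -> homog n f -> coef (deltaA f) P != 0 ->
  [&& admissible A P.1, admissible A P.2 & deg P.1 + deg P.2 == n].
Proof.
move=> fA fh; rewrite coef_deltaA (Lsum_undup f (fun m => cnt m P)) => /sum_nz [m min].
have mf : m \in map snd f by rewrite -mem_undup.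
case: (eqVneq (coef f m) 0) => [->|cm]; first by rewrite mul0r eqxx.
case: (eqVneq (cnt m P) 0) => [->|cP]; first by rewrite mulr0 eqxx.
move=> _; have := fh m cm => <-; apply: cnt_struct cP.
by case/mapP: mf => p pin ->; apply: (allP fA).
Qed.

Lemma delta_mon_swap m : perm_eq (map (@swp X) (delta_mon m)) (delta_mon m).
Proof. by case: m => [t|] //=; apply: delta_swap. Qed.

Lemma cnt_swap m a b : cnt m (a, b) = cnt m (b, a).
Proof.
rewrite /cnt -(perm_big _ (delta_mon_swap m)) big_map; apply: eq_bigr => q _.
by case: q => x y; rewrite /swp /= !xpair_eqE andbC.
Qed.

Lemma coef_delta_swap f a b : coef (deltaA f) (a, b) = coef (deltaA f) (b, a).
Proof. by rewrite !coef_deltaA; apply: eq_bigr => p _; rewrite cnt_swap. Qed.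

Lemma cnt_none t Q : admP A t -> cnt (Some t) (Q, None) = (Some t == Q)%:R.
Proof.
move=> Ht; rewrite /cnt /=.
rewrite (_ : \sum_(q <- delta_tree t) _ =
   \sum_(q <- delta_tree t | q.2 == None) (q == (Q, None))%:R :> K); last first.
  rewrite [RHS]big_mkcond; apply: eq_bigr => q _; case: ifP => // /negbT H.
  by case: (eqVneq q (Q, None)) H => // ->.
by rewrite -(big_filter _ (fun q : mon X * mon X => q.2 == None)) (delta_filter Ht) big_seq1 xpair_eqE eqxx andbT.
Qed.

Lemma coef_None f n : homog n f -> (1 <= n)%N -> coef f None = 0.
Proof. by move=> fh n1; apply/eqP; apply: contraLR n1 => /fh <-. Qed.

Lemma C1 f n a : inA A f -> homog n f -> (1 <= n)%N ->
  coef (deltaA f) (a, None) = coef f a.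
Proof.
move=> fA fh n1; rewrite coef_deltaA (@lin_ext _ _ f (fun m => cnt m (a, None)) (fun m => (m == a)%:R)) //.
move=> m cm; have := fh m cm; have := coef_mem cm.
case/mapP => p pin -> {m cm}; have := allP fA p pin.
case: p.2 => [t|] //= Ht dn; last by move: n1; rewrite -dn.
exact: cnt_none.
Qed.

Lemma coefL2 f a b :
  coef ([seq (p.1, (p.2, None)) | p <- f] ++ [seq (p.1, (None, p.2)) | p <- f]) (a, b)
  = (b == None)%:R * coef f a + (a == None)%:R * coef f b.
Proof.
rewrite /coef big_cat !big_map !mulr_sumr; congr (_ + _); apply: eq_bigr => p _ /=.
  by rewrite mulrCA -natrM mulnb xpair_eqE [None == b]eq_sym andbC.
by rewrite mulrCA -natrM mulnb xpair_eqE [None == a]eq_sym.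
Qed.

End Main.
Unset Implicit Arguments.
Set Strict Implicit.
Theorem proposition4p7p1 (X : countType) (K : fieldType)
  (charK : [pchar K] =i pred0) (A : algkind) (n : nat)
  (f : seq (K * mon X)) (fA : inA A f) (n_ge1 : (1 <= n)%N) (fhom : homog n f) :
  (* (i) *)
  (primitive f ->
   forall g1 g2 : seq (K * mon X), inA A g1 -> inA A g2 ->
     (exists d1, (1 <= d1)%N /\ homog d1 g1) ->
     (exists d2, (1 <= d2)%N /\ homog d2 g2) ->
     pairing f (shuffle A g1 g2) = 0)
  /\
  (* (ii) *)
  (forall (S : mon X) (k : nat), admissible A S -> deg S = k ->
     (1 <= k)%N -> (k <= n - 1)%N ->
     ((forall U, dpart S f U = 0) <->
      (forall g : seq (K * mon X), inA A g -> homog (n - k) g ->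
         pairing f (shuffle A (monom K S) g) = 0)))
  /\
  (* (iii) *)
  ((forall (S T : mon X) (k : nat), admissible A S -> admissible A T ->
      deg S = k -> deg T = (n - k)%N -> (1 <= k)%N -> (2 * k < n + 1)%N ->
      pairing f (shuffle A (monom K S) (monom K T)) = 0) ->
   primitive f).
Proof.
split; last split.
- move=> prim g1 g2 _ _ [d1 [d11 h1]] [d2 [d21 h2]].
  rewrite (pair_shuffle _ _ fA).
  rewrite (@lin_coef _ _ _ _ (fun P => coef g1 P.1 * coef g2 P.2) prim).
  rewrite big_cat !big_map /= (coef_None h1 d11) (coef_None h2 d21).
  by rewrite !big1 ?addr0 // => p _; rewrite ?mul0r ?mulr0.
- move=> S k SA dS k1 kn; split.
  + move=> H g gA gh; rewrite (pair_shuffle _ _ fA).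
    rewrite (@lin_ext _ _ _ (fun P => coef (monom K S) P.1 * coef g P.2) (fun _ => 0)).
      by rewrite big1 // => p _; rewrite mulr0.
    case=> a b /= cab; rewrite coef_monom; case: (eqVneq S a) => [Sa|]; last by rewrite mul0r.
    by move: cab; rewrite -Sa; have := H b; rewrite /dpart => ->; rewrite eqxx.
  + move=> H U; rewrite /dpart.
    case: (eqVneq (coef (deltaA f) (S, U)) 0) => // cSU.
    have /and3P [_ UA /eqP dU] := coefdelta_struct fA fhom cSU.
    rewrite -(pair_mon _ _ fA) //; apply: H; first by rewrite /inA /= UA.
    move=> m; rewrite coef_monom; case: (eqVneq U m) => [<- _|]; last by rewrite eqxx.
    rewrite /= in dU; rewrite -dU dS; lia.
- move=> H [a b]; rewrite coefL2.
  case: b => [tb|].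
  + case: a => [ta|].
    * rewrite /= !mul0r addr0.
      case: (eqVneq (coef (deltaA f) (Some ta, Some tb)) 0) => // cab.
      have /and3P [aA bA /eqP dab] := coefdelta_struct fA fhom cab.
      have pa : (0 < deg (Some ta))%N by apply: nleaves_pos; case/andP: aA.
      have pb : (0 < deg (Some tb))%N by apply: nleaves_pos; case/andP: bA.
      move: cab; case: (ltnP (2 * deg (Some ta)) (n + 1)) => hk.
        by rewrite -(pair_mon _ _ fA) // (H _ _ (deg (Some ta))) ?eqxx //=; move: dab => /= <-; lia.
      rewrite coef_delta_swap -(pair_mon _ _ fA) // (H _ _ (deg (Some tb))) ?eqxx //=;
        move: dab hk => /= <-; lia.
    * by rewrite coef_delta_swap (C1 _ fA fhom n_ge1) /= mul0r add0r mul1r.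
  + by rewrite (C1 _ fA fhom n_ge1) (coef_None fhom n_ge1) mulr0 addr0 mul1r.
Qed.
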